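(* The number of zero-normalized $\Gamma_{m,n}$-semimodules $\Delta$ satisfying $\widehat{\Delta}=\Delta$ equals $\binom{\lfloor m/2\rfloor+\lfloor n/2\rfloor}{\lfloor m/2\rfloor}$.
   Context: Let $m,n$ be coprime positive integers and $\Gamma_{m,n}=\{am+bn:a,b\in\mathbb{Z}_{\ge0}\}$. A $\Gamma_{m,n}$-semimodule is $\Delta\subset\mathbb{Z}_{\ge0}$ with $\Delta+\Gamma_{m,n}\subset\Delta$; zero-normalized means $\min\Delta=0$. Its dual is $\Delta^*=\{\varphi\in\mathbb{Z}:\varphi+\Delta\subset\Gamma_{m,n}\}$ and $\widehat\Delta=\Delta^*-\min\Delta^*$ (equivalently $\max(\mathbb{Z}\setminus\Delta)-(\mathbb{Z}\setminus\Delta)$). *)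

(* Defs.v *)
From mathcomp Require Import all_boot all_order all_algebra.
Set Implicit Arguments. Unset Strict Implicit. Unset Printing Implicit Defensive.
Import Order.TTheory GRing.Theory Num.Theory.

Definition inGamma (m n : nat) (z : int) : Prop :=
  exists a b : nat, z = Posz (a * m + b * n)%N.

Definition is_semimodule (m n : nat) (D : nat -> Prop) : Prop :=
  forall x a b : nat, D x -> D (x + a * m + b * n)%N.

(* zero-normalized: min Delta = 0 (Delta is a subset of Z_{>=0}). *)
Definition zero_normalized (D : nat -> Prop) : Prop := D 0%N.

Definition in_dual (m n : nat) (D : nat -> Prop) (phi : int) : Prop :=
  forall x : nat, D x -> inGamma m n (phi + Posz x)%R.

Definition is_min_dual (m n : nat) (D : nat -> Prop) (mu : int) : Prop :=
  in_dual m n D mu /\ (forall phi, in_dual m n D phi -> (mu <= phi)%R).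

(* hat Delta = Delta^* - min Delta^*, as a predicate on Z. *)
Definition hat (m n : nat) (D : nat -> Prop) (z : int) : Prop :=
  exists mu : int, is_min_dual m n D mu /\ in_dual m n D (z + mu)%R.

Definition self_dual (m n : nat) (D : nat -> Prop) : Prop :=
  forall z : int, hat m n D z <-> (exists x : nat, z = Posz x /\ D x).

Definition P_selfdual (m n : nat) (D : nat -> Prop) : Prop :=
  [/\ is_semimodule m n D, zero_normalized D & self_dual m n D].

(* Main.v *)
Require Import Defs.
From mathcomp Require Import all_boot all_order all_algebra.
From mathcomp Require Import zify ring.
From Stdlib Require Import Classical ClassicalEpsilon.
Import Order.TTheory GRing.Theory Num.Theory.
Set Implicit Arguments. Unset Strict Implicit. Unset Printing Implicit Defensive.
Local Open Scope ring_scope.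

Lemma int_min (P : int -> Prop) (z0 L : int) : P z0 -> (forall z, P z -> L <= z) ->
  exists mu, P mu /\ forall z, P z -> mu <= z.
Proof.
move=> Pz0 Lb.
have H : forall k : nat, P (L + k%:Z) -> exists mu, P mu /\ forall z, P z -> mu <= z.
  elim/ltn_ind => k IH Pk.
  case: (classic (exists j : nat, (j < k)%N /\ P (L + j%:Z))) => [[j [jk Pj]]|N].
    exact: IH Pj.
  exists (L + k%:Z); split => // z Pz.
  have Lz := Lb z Pz.
  case: (lerP (L + k%:Z) z) => // zlt.
  exfalso; apply: N; exists `|z - L|%N; split; first lia.
  have -> : L + `|z - L|%N = z by lia.
  done.
apply: (H `|z0 - L|%N).
have -> : L + `|z0 - L|%N = z0 by have := Lb z0 Pz0; lia.
done.
Qed.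

Lemma boundary (P : int -> Prop) (b0 b1 : int) : b1 < b0 -> P b0 -> ~ P b1 ->
  exists b, P b /\ ~ P (b - 1).
Proof.
move=> lt Pb0 Nb1.
have H : forall k : nat, forall b, b - b1 = k%:Z -> P b -> exists b, P b /\ ~ P (b - 1).
  elim => [|k IH] b Hb Pb.
    by exfalso; apply: Nb1; have <- : b = b1 by lia.
  case: (classic (P (b - 1))) => Pb1; last by exists b.
  apply: (IH (b - 1)) => //; lia.
apply: (H `|b0 - b1|%N b0) => //; lia.
Qed.


Lemma rep (m n : nat) : coprime m n -> forall z : int, exists a b : int, z = a * m + b * n.
Proof.
move=> cop z.
have : coprimez m n by rewrite coprimezE.
case/coprimezP => [[u v]] /= Huv.
exists (z * u), (z * v).
by rewrite -mulrA -mulrA -mulrDr Huv mulr1.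
Qed.

Lemma rep0 (m n : nat) : coprime m n -> (0 < n)%N -> forall z : int,
  exists a b : int, 0 <= a < n /\ z = a * m + b * n.
Proof.
move=> cop n0 z; have [a [b ->]] := rep cop z.
exists (a %% n)%Z, (b + (a %/ n)%Z * m); split; first lia.
rewrite {1}(divz_eq a n); ring.
Qed.

Lemma rep_uniq (m n : nat) : coprime m n -> (0 < n)%N -> forall a b a' b' : int,
  a * m + b * n = a' * m + b' * n -> exists j : int, a' = a + j * n /\ b' = b - j * m.
Proof.
move=> cop n0 a b a' b' E.
have cz : coprimez n m by rewrite coprimezE coprime_sym.
have : (n %| (a' - a) * m)%Z.
  apply/dvdzP; exists (b - b'). have -> : (a' - a) * m = (b - b') * n by lia. done.
rewrite Gauss_dvdzl // => /dvdzP [j Hj].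
exists j; split; first lia.
nia.
Qed.

Definition FG (m n : nat) : int := (n%:Z - 1) * m - n%:Z.

Lemma gamma_rep (m n : nat) : coprime m n -> (0 < n)%N -> forall a b : int,
  0 <= a < n -> (inGamma m n (a * m + b * n) <-> 0 <= b).
Proof.
move=> cop n0 a b Ha; split.
  case=> a' [b' E].
  have E' : a * m + b * n = a'%:Z * m + b'%:Z * n by rewrite E PoszD !PoszM.
  have [j [h1 h2]] := rep_uniq cop n0 E'.
  have j0 : 0 <= j by nia.
  nia.
move=> b0.
case: a Ha => [a'|//] Ha; case: b b0 => [b'|//] _.
exists a', b'; by rewrite PoszD !PoszM.
Qed.

Lemma gamma_sym (m n : nat) : coprime m n -> (0 < n)%N -> forall z,
  inGamma m n z <-> ~ inGamma m n (FG m n - z).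
Proof.
move=> cop n0 z; have [a [b [Ha ->]]] := rep0 cop n0 z.
have -> : FG m n - (a * m + b * n) = (n%:Z - 1 - a) * m + (-1 - b) * n.
  rewrite /FG; ring.
rewrite gamma_rep // gamma_rep //; [lia|lia].
Qed.

Lemma gamma0 m n : inGamma m n 0.
Proof. by exists 0%N, 0%N. Qed.

Definition EE (D : nat -> Prop) (z : int) : Prop := exists x : nat, z = x /\ D x.

Lemma EE_ge0 D z : EE D z -> 0 <= z.
Proof. by case=> x [-> _]. Qed.

Lemma EE_addG (m n : nat) D z g : is_semimodule m n D -> EE D z -> inGamma m n g -> EE D (z + g).
Proof.
move=> sm [x [-> Dx]] [a [b ->]].
exists (x + a * m + b * n)%N; split; last exact: sm.
by rewrite -PoszD addnA.
Qed.

Lemma dual_char (m n : nat) D phi : coprime m n -> (0 < n)%N -> is_semimodule m n D ->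
  (in_dual m n D phi <-> ~ EE D (FG m n - phi)).
Proof.
move=> cop n0 sm; split.
  move=> Hd [x [Ex Dx]].
  have := Hd x Dx; rewrite -Ex.
  have -> : phi + (FG m n - phi) = FG m n by ring.
  move/(gamma_sym cop n0); apply.
  have -> : FG m n - FG m n = 0 by ring.
  exact: gamma0.
move=> NE x Dx.
apply: NNPP => Ng.
have Hg : inGamma m n (FG m n - (phi + x%:Z)).
  apply: NNPP => H; apply: Ng; apply/(gamma_sym cop n0) => //.
apply: NE.
have -> : FG m n - phi = x%:Z + (FG m n - (phi + x%:Z)) by ring.
apply: (EE_addG sm) Hg; by exists x.
Qed.

Definition antisym (E : int -> Prop) := exists c, forall z, E z <-> ~ E (c - z).

Lemma selfdual_iff (m n : nat) D : coprime m n -> (0 < n)%N -> is_semimodule m n D -> D 0%N ->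
  (self_dual m n D <-> antisym (EE D)).
Proof.
move=> cop n0 sm D0.
have E0 : EE D 0 by exists 0%N.
split.
  move=> sd.
  have [mu [[Hmu1 Hmu2] _]] : hat m n D 0 by apply/sd; exists 0%N.
  exists (FG m n - mu) => z.
  have -> : FG m n - mu - z = FG m n - (z + mu) by ring.
  rewrite -(dual_char _ cop n0 sm).
  split.
    case=> x [-> Dx].
    have : hat m n D x by apply/sd; exists x.
    case=> mu' [[H1 H2] H3].
    have -> : mu = mu' by apply/le_anti; rewrite Hmu2 // H2.
    done.
  move=> Hd.
  have [x [-> Dx]] : exists x : nat, z = x /\ D x by apply/sd; exists mu.
  by exists x.
case=> c Hc.
have dc : forall phi, in_dual m n D phi <-> EE D (c - FG m n + phi).
  move=> phi; rewrite (dual_char _ cop n0 sm) (Hc (c - FG m n + phi)).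
  have -> : c - (c - FG m n + phi) = FG m n - phi by ring.
  done.
have min0 : is_min_dual m n D (FG m n - c).
  split; first by apply/dc; have -> : c - FG m n + (FG m n - c) = 0 by ring.
  move=> phi /dc /EE_ge0; lia.
move=> z; split.
  case=> mu [[H1 H2] H3].
  have emu : mu = FG m n - c by apply/le_anti; rewrite H2 ?(proj2 min0 mu H1) //; exact: (proj1 min0).
  move: H3; rewrite dc emu.
  have -> : c - FG m n + (z + (FG m n - c)) = z by ring.
  done.
case=> x [-> Dx]; exists (FG m n - c); split => //.
apply/dc; have -> : c - FG m n + (x%:Z + (FG m n - c)) = x by ring.
by exists x.
Qed.

Definition ST (m n : nat) (T : int -> int) (z : int) :=
  exists a b : int, z = a * m + b * n /\ T a <= b.
Definition TT1 (T : int -> int) := forall a, T (a + 1) <= T a.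
Definition TT2 (m n : nat) (T : int -> int) := forall a, T (a + n%:Z) = T a - m%:Z.

Lemma T2z (m n : nat) T : TT2 m n T -> forall (j : int) a, T (a + j * n) = T a - j * m.
Proof.
move=> h2.
have Hp : forall k : nat, forall a, T (a + k%:Z * n) = T a - k%:Z * m.
  elim => [|k IH] a; first by rewrite !mul0r addr0 subr0.
  have -> : a + k.+1%:Z * n = (a + k%:Z * n) + n by rewrite -addn1 PoszD; ring.
  rewrite h2 IH -addn1 PoszD; ring.
case=> [k|k] a; first exact: Hp.
have := Hp k.+1 (a + Negz k * n).
have -> : a + Negz k * n + k.+1%:Z * n = a by rewrite NegzE; ring.
move=> ->; rewrite NegzE; ring.
Qed.

Lemma T1mono T : TT1 T -> forall a a', a <= a' -> T a' <= T a.
Proof.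
move=> h1.
have H : forall k : nat, forall a, T (a + k%:Z) <= T a.
  elim => [|k IH] a; first by rewrite addr0.
  have -> : a + k.+1%:Z = (a + k%:Z) + 1 by rewrite -addn1 PoszD; ring.
  exact: le_trans (h1 _) (IH a).
move=> a a' le; have := H `|a' - a|%N a.
by have -> : a + `|a' - a|%N = a' by lia.
Qed.

Lemma ST_rep (m n : nat) T : coprime m n -> (0 < n)%N -> TT2 m n T ->
  forall a b : int, ST m n T (a * m + b * n) <-> T a <= b.
Proof.
move=> cop n0 h2 a b; split; last by move=> H; exists a, b.
case=> a' [b' [E H]].
have [j [Ea Eb]] := rep_uniq cop n0 E.
rewrite Ea Eb (T2z h2) in H; lia.
Qed.

Lemma ST_add (m n : nat) T : coprime m n -> (0 < n)%N -> TT1 T -> TT2 m n T ->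
  forall z (x y : nat), ST m n T z -> ST m n T (z + (x * m + y * n)%N%:Z).
Proof.
move=> cop n0 h1 h2 z x y [a [b [-> H]]].
exists (a + x%:Z), (b + y%:Z); split; first by rewrite PoszD !PoszM; ring.
have := T1mono h1 (a := a) (a' := a + x%:Z); lia.
Qed.

Lemma ST_lb (m n : nat) T : coprime m n -> (0 < n)%N -> TT1 T -> TT2 m n T ->
  forall z, ST m n T z -> (T 0 - m%:Z) * n%:Z <= z.
Proof.
move=> cop n0 h1 h2 z [a [b [-> H]]].
pose q := (a %/ n)%Z; pose r := (a %% n)%Z.
have Ea : a = r + q * n by rewrite /r /q addrC -divz_eq.
have Hr : 0 <= r < n by rewrite /r; lia.
have HTr : T a = T r - q * m by rewrite Ea (T2z h2).
have HTn : T r >= T n%:Z - 0 by have := T1mono h1 (a := r) (a' := n%:Z); lia.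
have := h2 0; rewrite add0r => HTn'.
have : a * m + b * n = r * m + (b + q * m) * n by rewrite Ea; ring.
move=> ->.
nia.
Qed.

Lemma ST_min (m n : nat) T : coprime m n -> (0 < n)%N -> TT1 T -> TT2 m n T ->
  exists mu, ST m n T mu /\ forall z, ST m n T z -> mu <= z.
Proof.
move=> cop n0 h1 h2.
apply: (@int_min _ (0 * m%:Z + T 0 * n%:Z) ((T 0 - m%:Z) * n%:Z)).
  by exists 0, (T 0).
exact: ST_lb.
Qed.

Definition trans (T : int -> int) (a0 b0 : int) := fun a => T (a + a0) - b0.

Lemma trans_T1 T a0 b0 : TT1 T -> TT1 (trans T a0 b0).
Proof. move=> h a; rewrite /trans; have := h (a + a0); have -> : a + 1 + a0 = a + a0 + 1 by ring. by rewrite lerD2r. Qed.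

Lemma trans_T2 m n T a0 b0 : TT2 m n T -> TT2 m n (trans T a0 b0).
Proof. move=> h a; rewrite /trans; have -> : a + n%:Z + a0 = a + a0 + n%:Z by ring. rewrite h; ring. Qed.

Lemma ST_trans (m n : nat) T a0 b0 : coprime m n -> (0 < n)%N -> TT2 m n T ->
  forall z, ST m n (trans T a0 b0) z <-> ST m n T (z + (a0 * m + b0 * n)).
Proof.
move=> cop n0 h2 z; have [a [b ->]] := rep cop z.
have -> : a * m + b * n + (a0 * m + b0 * n) = (a + a0) * m + (b + b0) * n by ring.
rewrite !ST_rep //; last exact: trans_T2.
rewrite /trans; lia.
Qed.

Lemma ST_ext (m n : nat) T T' : coprime m n -> (0 < n)%N -> TT2 m n T -> TT2 m n T' ->
  (forall z, ST m n T z <-> ST m n T' z) -> forall a, T a = T' a.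
Proof.
move=> cop n0 h2 h2' H a.
have := H (a * m + T a * n); have := H (a * m + T' a * n).
rewrite !ST_rep //; lia.
Qed.

Lemma EE_nat (m n : nat) D : is_semimodule m n D -> D 0%N ->
  forall x y : nat, EE D (x%:Z * m + y%:Z * n).
Proof.
move=> sm D0 x y; exists (x * m + y * n)%N; split; first by rewrite PoszD !PoszM.
have := sm 0%N x y D0; by rewrite add0n.
Qed.

Lemma EE_addn (m n : nat) D z : is_semimodule m n D -> EE D z -> EE D (z + n).
Proof.
move=> sm [x [-> Dx]]; exists (x + 0 * m + 1 * n)%N; split; last exact: sm.
by rewrite mul0n addn0 mul1n PoszD.
Qed.

Lemma EE_addm (m n : nat) D z : is_semimodule m n D -> EE D z -> EE D (z + m).
Proof.
move=> sm [x [-> Dx]]; exists (x + 1 * m + 0 * n)%N; split; last exact: sm.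
by rewrite mul0n addn0 mul1n PoszD.
Qed.

Lemma D_threshold (m n : nat) D : coprime m n -> (0 < n)%N -> is_semimodule m n D -> D 0%N ->
  exists T, [/\ TT1 T, TT2 m n T & forall z, EE D z <-> ST m n T z].
Proof.
move=> cop n0 sm D0.
have H : forall a : int, exists b : int, EE D (a * m + b * n) /\ ~ EE D (a * m + (b - 1) * n).
  move=> a.
  pose b0 := - ((a %/ n)%Z * m).
  apply: (@boundary (fun b => EE D (a * m + b * n)) b0 (b0 - m%:Z - 1)); first lia.
    have -> : a * m + b0 * n = `|(a %% n)%Z|%N%:Z * m + 0%N%:Z * n.
      rewrite /b0 {1}(divz_eq a n) mul0r addr0.
      have -> : `|(a %% n)%Z|%N%:Z = (a %% n)%Z by lia.
      ring.
    exact: EE_nat.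
  move/EE_ge0.
  have -> : a * m + (b0 - m%:Z - 1) * n = (a %% n)%Z * m - (m%:Z + 1) * n.
    rewrite /b0 {1}(divz_eq a n); ring.
  have : 0 <= (a %% n)%Z < n by lia.
  nia.
pose T a := proj1_sig (constructive_indefinite_description _ (H a)).
have HT (a : int) : EE D (a * m + T a * n) /\ ~ EE D (a * m + (T a - 1) * n).
  exact: (proj2_sig (constructive_indefinite_description _ (H a))).
have up : forall (z : int) (k : nat), EE D z -> EE D (z + k%:Z * n).
  move=> z; elim => [|k IH] Ez; first by rewrite mul0r addr0.
  have -> : z + k.+1%:Z * n = z + k%:Z * n + n by rewrite -addn1 PoszD; ring.
  exact: (EE_addn sm (IH Ez)).
have col : forall a b : int, EE D (a * m + b * n) <-> T a <= b.
  move=> a b; split.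
    move=> Eb; apply: NNPP => Nle; apply: (proj2 (HT a)).
    have lt : b < T a by lia.
    have := up _ `|(T a - 1 - b)%R|%N Eb.
    have -> : a * m + b * n + `|(T a - 1 - b)%R|%N%:Z * n = a * m + (T a - 1) * n.
      have -> : `|(T a - 1 - b)%R|%N%:Z = T a - 1 - b by lia.
      ring.
    done.
  move=> le; have := up _ `|(b - T a)%R|%N (proj1 (HT a)).
  have -> : `|(b - T a)%R|%N%:Z = b - T a by lia.
  by have -> : a * m + T a * n + (b - T a) * n = a * m + b * n by ring.
have h2 : TT2 m n T.
  move=> a; apply/le_anti/andP; split.
    rewrite -col.
    have -> : (a + n%:Z) * m + (T a - m%:Z) * n = a * m + T a * n by ring.
    exact: (proj1 (HT a)).
  have : T a <= T (a + n%:Z) + m%:Z.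
    rewrite -col.
    have -> : a * m + (T (a + n%:Z) + m%:Z) * n = (a + n%:Z) * m + T (a + n%:Z) * n by ring.
    exact: (proj1 (HT _)).
  lia.
exists T; split => //.
  move=> a; rewrite -col.
  have := EE_addm sm (proj1 (HT a)).
  by have -> : a * m + T a * n + m = (a + 1) * m + T a * n by ring.
move=> z; have [a [b ->]] := rep cop z.
by rewrite col ST_rep.
Qed.

Lemma antisym_sym (m n : nat) T : coprime m n -> (0 < n)%N -> TT2 m n T ->
  antisym (ST m n T) <-> exists k C, forall a, T a + T (k - a) = C.
Proof.
move=> cop n0 h2; split.
  case=> c Hc; have [k [c2 Ec]] := rep cop c.
  exists k, (c2 + 1) => a.
  have H b : T a <= b <-> ~ (T (k - a) <= c2 - b).
    rewrite -(ST_rep cop n0 h2) -(ST_rep cop n0 h2 (k - a)) Hc Ec.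
    have -> : k * m + c2 * n - (a * m + b * n) = (k - a) * m + (c2 - b) * n by ring.
    done.
  have H1 := proj1 (H (T a)) (lexx _).
  have H2 : T a <= c2 + 1 - T (k - a) by apply/H; lia.
  have H1' : c2 - T a < T (k - a) by rewrite ltNge; exact/negP.
  move: H1' H2; set u := T (k - a); set v := T a; lia.
case=> k [C HC]; exists (k * m + (C - 1) * n) => z.
have [a [b ->]] := rep cop z.
have -> : k * m + (C - 1) * n - (a * m + b * n) = (k - a) * m + (C - 1 - b) * n by ring.
rewrite !ST_rep //; have := HC a; lia.
Qed.

Definition isMin (P : int -> Prop) mu := P mu /\ forall z, P z -> mu <= z.

Lemma isMin_uniq P mu mu' : isMin P mu -> isMin P mu' -> mu = mu'.
Proof. by case=> h1 h2 [h3 h4]; apply/le_anti; rewrite h2 // h4. Qed.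

Definition Dn (m n : nat) (T : int -> int) (x : nat) : Prop :=
  exists mu, isMin (ST m n T) mu /\ ST m n T (x%:Z + mu).

Lemma Dn_EE (m n : nat) T : coprime m n -> (0 < n)%N -> TT1 T -> TT2 m n T ->
  exists mu, isMin (ST m n T) mu /\ forall z, EE (Dn m n T) z <-> ST m n T (z + mu).
Proof.
move=> cop n0 h1 h2; have [mu Hmu] := ST_min cop n0 h1 h2.
exists mu; split => // z; split.
  case=> x [-> [mu' [Hm' H]]]; by rewrite (isMin_uniq Hmu Hm').
move=> H; have := proj2 Hmu _ H => le.
exists `|z|%N; split; first lia.
exists mu; split => //; by have -> : `|z|%N%:Z = z by lia.
Qed.

Lemma Dn_semi (m n : nat) T : coprime m n -> (0 < n)%N -> TT1 T -> TT2 m n T ->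
  is_semimodule m n (Dn m n T).
Proof.
move=> cop n0 h1 h2 x a b [mu [Hm H]]; exists mu; split => //.
have := ST_add cop n0 h1 h2 a b H.
by have -> : x%:Z + mu + (a * m + b * n)%N%:Z = (x + a * m + b * n)%N%:Z + mu
  by rewrite !PoszD !PoszM; ring.
Qed.

Lemma Dn_0 (m n : nat) T : coprime m n -> (0 < n)%N -> TT1 T -> TT2 m n T -> Dn m n T 0%N.
Proof.
move=> cop n0 h1 h2; have [mu Hmu] := ST_min cop n0 h1 h2.
by exists mu; split => //; rewrite add0r; case: Hmu.
Qed.

Lemma Dn_selfdual (m n : nat) T k C : coprime m n -> (0 < n)%N -> TT1 T -> TT2 m n T ->
  (forall a, T a + T (k - a) = C) -> P_selfdual m n (Dn m n T).
Proof.
move=> cop n0 h1 h2 hs.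
have sm := Dn_semi cop n0 h1 h2; have d0 := Dn_0 cop n0 h1 h2.
split => //; apply/selfdual_iff => //.
have [c Hc] : antisym (ST m n T) by apply/antisym_sym => //; exists k, C.
have [mu [Hm HE]] := Dn_EE cop n0 h1 h2.
exists (c - mu - mu) => z; rewrite !HE Hc.
by have -> : c - (z + mu) = c - mu - mu - z + mu by ring.
Qed.

Lemma Dn_eq_trans (m n : nat) T T' : coprime m n -> (0 < n)%N -> TT1 T -> TT2 m n T ->
  TT1 T' -> TT2 m n T' -> (forall x, Dn m n T x <-> Dn m n T' x) ->
  exists a0 b0, forall a, T' a = trans T a0 b0 a.
Proof.
move=> cop n0 h1 h2 h1' h2' E.
have [mu [Hm HE]] := Dn_EE cop n0 h1 h2.
have [mu' [Hm' HE']] := Dn_EE cop n0 h1' h2'.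
have [a0 [b0 Ec]] := rep cop (mu - mu').
exists a0, b0; apply: (ST_ext cop n0 h2' (trans_T2 a0 b0 h2)).
move=> z; rewrite ST_trans // -Ec.
have -> : z = (z - mu') + mu' by ring.
rewrite -HE'.
have -> : z - mu' + mu' + (mu - mu') = (z - mu') + mu by ring.
rewrite -HE; split; case=> x [Ex Dx]; exists x; split => //; apply/E => //.
Qed.

Lemma D_is_Dn (m n : nat) D T c0 : coprime m n -> (0 < n)%N -> TT1 T -> TT2 m n T ->
  D 0%N -> (forall z, ST m n T z <-> EE D (z + c0)) -> forall x, D x <-> Dn m n T x.
Proof.
move=> cop n0 h1 h2 D0 H.
have Hm : isMin (ST m n T) (- c0).
  split; first by apply/H; rewrite addNr; exists 0%N.
  move=> z /H /EE_ge0; lia.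
move=> x; split.
  move=> Dx; exists (- c0); split => //; apply/H.
  rewrite addrNK; by exists x.
case=> mu [Hm' /H]; rewrite (isMin_uniq Hm' Hm) addrNK.
by case=> y [/eqP]; rewrite eqz_nat => /eqP ->.
Qed.

Definition sym (T : int -> int) k C := forall a, T a + T (k - a) = C.

Definition canon (n : nat) (T : int -> int) :=
  [/\ T 0 = 0, sym T 1 (T 1) & (~~ odd n -> exists q : int, T 1 = 2 * q + 1)].

Lemma nat_split (n : nat) : n%:Z = 2 * (n./2)%:Z + (odd n)%:Z.
Proof. have := odd_double_half n; rewrite -muln2; case: (odd n) => /= h; lia. Qed.

Lemma odd_m (m n : nat) : coprime m n -> ~~ odd n -> odd m.
Proof.
move=> cop en; apply: contraLR cop => em.
have d2 : (2 %| gcdn m n)%N by rewrite dvdn_gcd -!dvdn2 /= ?negbK in em en *; rewrite em en.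
by apply/negP => /eqP e; rewrite e in d2.
Qed.

Lemma sym_trans T k C a0 b0 : sym T k C -> sym (trans T a0 b0) (k - 2 * a0) (C - 2 * b0).
Proof.
move=> hs a; rewrite /trans.
have -> : k - 2 * a0 - a + a0 = k - (a + a0) by ring.
have := hs (a + a0); lia.
Qed.

Lemma sym_shiftn (m n : nat) T k C : TT2 m n T -> sym T k C -> sym T (k + n%:Z) (C - m%:Z).
Proof.
move=> h2 hs a; have -> : k + n%:Z - a = (k - a) + n%:Z by ring.
rewrite h2; have := hs a; lia.
Qed.

Lemma trans_trans T a0 b0 a1 b1 a : trans (trans T a0 b0) a1 b1 a = trans T (a1 + a0) (b0 + b1) a.
Proof. rewrite /trans; have -> : a + a1 + a0 = a + (a1 + a0) by ring. ring. Qed.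

Lemma canonicalize (m n : nat) T k C : coprime m n -> (0 < n)%N -> TT1 T -> TT2 m n T ->
  sym T k C -> exists T', [/\ TT1 T', TT2 m n T', canon n T' &
     exists a0 b0, forall a, T' a = trans T a0 b0 a].
Proof.
move=> cop n0 h1 h2 hs.
have mE := nat_split m; have nE := nat_split n.
have step1 : exists k' C' p, k' = 2 * p + 1 /\ sym T k' C'.
  have kE : k = 2 * (k %/ 2)%Z + (k %% 2)%Z by lia.
  case: (boolP ((k %% 2)%Z == 0)) => [/eqP k0|k1]; last first.
    exists k, C, (k %/ 2)%Z; split => //; lia.
  case: (boolP (odd n)) => on.
    exists (k + n%:Z), (C - m%:Z), ((k %/ 2)%Z + (n./2)%:Z); split; last exact: sym_shiftn.
    rewrite on in nE; lia.
  exfalso.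
  have om := odd_m cop on; rewrite om in mE; rewrite (negbTE on) in nE.
  pose p := (k %/ 2)%Z; pose kk := (n./2)%:Z.
  have e1 := hs p; have e2 := hs (p + kk).
  have q1 : k - p = p by rewrite /p; lia.
  have q2 : k - (p + kk) = p - kk by rewrite /p; lia.
  have q3 : p - kk + n%:Z = p + kk by rewrite /kk; lia.
  have e3 := h2 (p - kk).
  rewrite q1 in e1; rewrite q2 in e2; rewrite q3 in e3.
  move: e1 e2 e3; set u := T p; set v := T (p + kk); set w := T (p - kk); lia.
case: step1 => k' [C' [p [k'E hs']]].
pose T1 := trans T p (T p).
have h11 : TT1 T1 := trans_T1 p (T p) h1.
have h12 : TT2 m n T1 := trans_T2 p (T p) h2.
have s1 : sym T1 1 (T1 1).
  have := sym_trans p (T p) hs'; have -> : k' - 2 * p = 1 by lia.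
  move=> hh; have e := hh 0; rewrite /T1 /trans add0r subrr in e.
  have -> : T1 1 = C' - 2 * T p - 0 by rewrite -e; rewrite /T1 /trans subr0; ring.
  by rewrite subr0.
have T10 : T1 0 = 0 by rewrite /T1 /trans add0r subrr.
case: (boolP (odd n)) => on.
  exists T1; split => //; first by split => //; rewrite on.
  by exists p, (T p).
case: (boolP (((T1 1) %% 2)%Z == 1)) => /eqP o1.
  exists T1; split => //; first split => //.
    move=> _; exists ((T1 1) %/ 2)%Z; move: o1; set u := T1 1; lia.
  by exists p, (T p).
have om := odd_m cop on; rewrite om in mE; rewrite (negbTE on) in nE.
pose kk := (n./2)%:Z.
pose T2 := trans T1 kk (T1 kk).
have s2 : sym T2 1 (T1 1 - m%:Z - 2 * T1 kk).
  have := sym_trans kk (T1 kk) (sym_shiftn h12 s1).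
  by have -> : 1 + n%:Z - 2 * kk = 1 by rewrite /kk; lia.
have T20 : T2 0 = 0 by rewrite /T2 /trans add0r subrr.
have e20 := s2 0; rewrite T20 add0r subr0 in e20.
exists T2; split.
- exact: trans_T1.
- exact: trans_T2.
- split => //; first by rewrite e20.
  move=> _; rewrite e20.
  exists (((T1 1) %/ 2)%Z - (m./2)%:Z - T1 kk - 1).
  move: o1 mE; set u := T1 1; set v := T1 kk; lia.
- exists (kk + p), (T p + T1 kk) => a.
  by rewrite /T2 /T1 trans_trans.
Qed.

Lemma canon_trans_eq (m n : nat) T T' a0 b0 : coprime m n -> (0 < n)%N ->
  TT2 m n T -> canon n T -> canon n T' ->
  (forall a, T' a = trans T a0 b0 a) -> forall a, T' a = T a.
Proof.
move=> cop n0 h2 [c0 cs cp] [c0' cs' cp'] E.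
have mE := nat_split m; have nE := nat_split n.
have b0E : b0 = T a0 by have := E 0; rewrite c0' /trans add0r; lia.
pose d := T (1 + a0) + b0 - T 1.
have Hd : forall x, T (x + 2 * a0) = T x + d.
  move=> x.
  have e1 := cs' (x + a0); have e2 := cs x.
  rewrite !E /trans in e1.
  have q1 : x + a0 + a0 = x + 2 * a0 by ring.
  have q2 : 1 - (x + a0) + a0 = 1 - x by ring.
  rewrite q1 q2 in e1; rewrite /d.
  move: e1 e2; set u := T (x + 2 * a0); set v := T (1 - x); set w := T x;
    set y := T (1 + a0); set z := T 1; lia.
have Hj : forall j : nat, T (j%:Z * (2 * a0)) = j%:Z * d.
  elim => [|j IH]; first by rewrite !mul0r c0.
  have -> : j.+1%:Z * (2 * a0) = j%:Z * (2 * a0) + 2 * a0 by rewrite -addn1 PoszD; ring.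
  rewrite Hd IH -addn1 PoszD; ring.
have Hn := Hj n; have := T2z h2 (2 * a0) 0; rewrite add0r c0 sub0r.
have -> : 2 * a0 * n%:Z = n%:Z * (2 * a0) by ring.
rewrite Hn => nd.
have cz : coprimez n m by rewrite coprimezE coprime_sym.
have : (n%:Z %| (2 * a0) * m%:Z)%Z.
  apply/dvdzP; exists (- d); move: nd; nia.
rewrite Gauss_dvdzl // => /dvdzP [l hl].
have even_case : forall j : int, a0 = j * n%:Z -> forall a, T' a = T a.
  move=> j ea a; rewrite E /trans ea (T2z h2).
  have := E 0; rewrite /trans ea (T2z h2) c0 c0'; lia.
have lE : l = 2 * (l %/ 2)%Z + (l %% 2)%Z by lia.
case: (boolP ((l %% 2)%Z == 0)) => /eqP l2.
  apply: (even_case (l %/ 2)%Z); rewrite l2 addr0 in lE.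
  move: hl; rewrite lE; nia.
case: (boolP (odd n)) => on.
  exfalso.
  have c2 : coprimez 2 n by rewrite coprimezE /= coprime2n.
  have : (2 %| l * n%:Z)%Z by apply/dvdzP; exists a0; rewrite -hl; ring.
  rewrite Gauss_dvdzl // => /dvdzP [q hq]; lia.
exfalso.
have om := odd_m cop on; rewrite om in mE; rewrite (negbTE on) in nE.
have [q1 hq1] := cp on; have [q2 hq2] := cp' on.
pose kk := (n./2)%:Z.
have ea : a0 = kk + (l %/ 2)%Z * n%:Z.
  have l1 : (l %% 2)%Z = 1 by lia.
  rewrite l1 in lE; move: hl; rewrite lE nE /kk; nia.
have e1 : T' 1 = T (1 + kk) - T kk - 0.
  have := E 0; have := E 1; rewrite /trans ea !addrA (T2z h2) (T2z h2) c0' add0r. set u := T (1 + kk); set v := T kk; set w := T' 1; lia.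
have e2 := cs kk.
have e3 := h2 (1 - kk).
have q3 : 1 - kk + n%:Z = 1 + kk by rewrite /kk; lia.
rewrite q3 in e3.
move: e1 e2 e3 hq1 hq2; set u := T (1 + kk); set v := T kk; set w := T (1 - kk);
  set y := T 1; set z := T' 1; lia.
Qed.

Definition TB (m n : nat) (B : nat -> int) (a : int) : int :=
  B `|(a %% n)%Z|%N - m%:Z * (a %/ n)%Z.

Lemma TB_eval (m n : nat) B : (0 < n)%N -> forall (q : int) (r : nat), (r < n)%N ->
  TB m n B (q * n%:Z + r%:Z) = B r - m%:Z * q.
Proof.
move=> n0 q r rn; rewrite /TB.
have nz : n%:Z != 0 by lia.
rewrite divzMDl // divz_small; last by apply/andP; split; lia.
have -> : ((q * n%:Z + r%:Z) %% n)%Z = r%:Z.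
  rewrite modzMDl modz_small //; apply/andP; split; lia.
by rewrite addr0.
Qed.

Lemma TB_split (n : nat) (a : int) : (0 < n)%N ->
  exists (q : int) (r : nat), a = q * n%:Z + r%:Z /\ (r < n)%N.
Proof.
move=> n0; exists (a %/ n)%Z, `|(a %% n)%Z|%N; split; last by lia.
have -> : `|(a %% n)%Z|%N%:Z = (a %% n)%Z by lia.
exact: divz_eq.
Qed.

Lemma TB_T2 (m n : nat) B : (0 < n)%N -> TT2 m n (TB m n B).
Proof.
move=> n0 a; have [q [r [-> Hr]]] := TB_split a n0.
have -> : q * n%:Z + r%:Z + n%:Z = (q + 1) * n%:Z + r%:Z by ring.
rewrite !TB_eval //; ring.
Qed.

Lemma TB_T1 (m n : nat) B : (0 < n)%N -> (forall j, (j < n)%N -> B j.+1 <= B j) ->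
  B n = B 0%N - m%:Z -> TT1 (TB m n B).
Proof.
move=> n0 Bm Bn a; have [q [r [-> Hr]]] := TB_split a n0.
rewrite TB_eval //.
case: (ltnP r.+1 n) => h.
  have -> : q * n%:Z + r%:Z + 1 = q * n%:Z + r.+1%:Z by rewrite -addn1 PoszD; ring.
  rewrite TB_eval //; have := Bm r (ltnW h); lia.
have rE : r.+1 = n by apply/eqP; rewrite eqn_leq h Hr.
have -> : q * n%:Z + r%:Z + 1 = (q + 1) * n%:Z + 0%N%:Z by rewrite -rE -addn1 PoszD; ring.
rewrite TB_eval //; have := Bm r Hr; rewrite rE Bn; lia.
Qed.

Lemma TB_sym_reduce (m n : nat) B : (0 < n)%N ->
  (forall r : nat, (r < n)%N -> TB m n B r%:Z + TB m n B (1 - r%:Z) = TB m n B 1) ->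
  sym (TB m n B) 1 (TB m n B 1).
Proof.
move=> n0 H a; have [q [r [-> Hr]]] := TB_split a n0.
have h2 := TB_T2 m B n0.
have -> : q * n%:Z + r%:Z = r%:Z + q * n%:Z by ring.
have -> : 1 - (r%:Z + q * n%:Z) = (1 - r%:Z) + (- q) * n%:Z by ring.
rewrite !(T2z h2) -(H r Hr); ring.
Qed.

Definition xv (h : nat) (s : seq nat) (j : nat) : nat := nth h s j.-1.
Definition Xn (n h : nat) (s : seq nat) (j : nat) : nat :=
  if (j <= n./2)%N then xv h s j else (2 * h - xv h s (n.+1 - j))%N.
Definition Bs (m n : nat) (s : seq nat) (j : nat) : int :=
  if j == 0%N then 0 else - ((xv m./2 s 1 + odd m + Xn n m./2 s j)%N%:Z).
Definition Ts (m n : nat) s := TB m n (Bs m n s).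

Definition good (m n : nat) (s : seq nat) :=
  [/\ size s = n./2, sorted leq s & all (fun x => x <= m./2)%N s].

Lemma xv_le h s j : all (fun x => x <= h)%N s -> (xv h s j <= h)%N.
Proof.
move=> /(all_nthP h) A; rewrite /xv.
case: (ltnP j.-1 (size s)) => hj; first exact: A.
by rewrite nth_default.
Qed.

Lemma xv_mono h s i j : sorted leq s -> all (fun x => x <= h)%N s ->
  (0 < i)%N -> (i <= j)%N -> (xv h s i <= xv h s j)%N.
Proof.
move=> so A i0 ij; rewrite /xv.
case: (ltnP j.-1 (size s)) => hj.
  apply: (sorted_leq_nth leq_trans leqnn) => //; rewrite ?inE /=; lia.
rewrite (nth_default _ hj); exact: (xv_le i A).
Qed.


Lemma Xn_mono m n s j : good m n s -> (0 < j)%N -> (j < n)%N ->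
  (Xn n m./2 s j <= Xn n m./2 s j.+1)%N.
Proof.
case=> sz so A j0 jn; rewrite /Xn.
have le1 := xv_le (n.+1 - j.+1) A; have le2 := xv_le j A.
case: (leqP j.+1 n./2) => h1.
  rewrite ifT; last lia.
  exact: xv_mono.
case: (leqP j n./2) => h2.
  lia.
have := xv_mono so A (i := n.+1 - j.+1) (j := n.+1 - j); lia.
Qed.

Lemma Xn_sym m n s j : good m n s -> (0 < j)%N -> (j <= n)%N ->
  (Xn n m./2 s j + Xn n m./2 s (n.+1 - j) = 2 * m./2)%N.
Proof.
case=> sz so A j0 jn; rewrite /Xn.
have le1 := xv_le j A; have le2 := xv_le (n.+1 - j) A.
case: (leqP j n./2) => h1.
  rewrite ifF; last lia.
  have -> : (n.+1 - (n.+1 - j) = j)%N by lia.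
  lia.
case: (leqP (n.+1 - j) n./2) => h2; first lia.
have ej : j = n./2.+1 by lia.
have xa : xv m./2 s j = m./2.
  by rewrite /xv nth_default // sz ej.
have xb : xv m./2 s (n.+1 - j) = m./2.
  rewrite /xv nth_default // sz; lia.
have xc : xv m./2 s (n.+1 - (n.+1 - j)) = m./2.
  rewrite /xv nth_default // sz; lia.
rewrite xb xc; lia.
Qed.

Lemma Bs_props m n s : (0 < n)%N -> good m n s ->
  [/\ Bs m n s 0 = 0, Bs m n s n = Bs m n s 0 - m%:Z &
      forall j, (j < n)%N -> Bs m n s j.+1 <= Bs m n s j].
Proof.
move=> n0 g; have [sz so A] := g.
split => //.
  rewrite /Bs eqxx ifF; last lia.
  rewrite /Xn ifF; last lia.
  have := xv_le 1 A; have -> : (n.+1 - n = 1)%N by lia.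
  lia.
move=> j jn; rewrite /Bs /=.
case: (posnP j) => [->|j0]; first lia.

have := Xn_mono g j0 jn; lia.
Qed.

Lemma Ts_T1T2 m n s : (0 < n)%N -> good m n s -> TT1 (Ts m n s) /\ TT2 m n (Ts m n s).
Proof.
move=> n0 g; have [b0 bn bm] := Bs_props n0 g.
split; [exact: TB_T1 | exact: TB_T2].
Qed.

Lemma Ts_small m n s (j : nat) : (0 < n)%N -> (j < n)%N -> Ts m n s j%:Z = Bs m n s j.
Proof.
move=> n0 jn; rewrite /Ts.
have := TB_eval m (Bs m n s) n0 0 jn; rewrite mul0r add0r mulr0 subr0; done.
Qed.

Lemma Ts_canon m n s : (0 < n)%N -> coprime m n -> good m n s -> canon n (Ts m n s).
Proof.
move=> n0 cop g; have [sz so A] := g.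
have [b0 bn bm] := Bs_props n0 g.
have [h1 h2] := Ts_T1T2 n0 g.
have T0 : Ts m n s 0 = 0 by rewrite (Ts_small m s (j := 0) n0 n0) b0.
split => //.
  apply: TB_sym_reduce => // r rn.
  case: r rn => [|r] rn; first by rewrite -/(Ts m n s) T0 add0r subr0.
  case: r rn => [|r] rn; first by rewrite -/(Ts m n s) subrr T0 addr0.
  rewrite -/(Ts m n s).
  have e1 := h2 (1 - r.+2%:Z).
  have q1 : 1 - r.+2%:Z + n%:Z = (n.+1 - r.+2)%N%:Z by lia.
  rewrite q1 in e1.
  rewrite (Ts_small _ _ n0 rn) (Ts_small _ _ n0 (j := 1)); last lia.
  rewrite Ts_small in e1; last lia; last done.
  have := Xn_sym g (j := r.+2) isT (ltnW rn).
  have x1 : Xn n m./2 s 1 = xv m./2 s 1 by rewrite /Xn ifT //; lia.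
  move: e1; rewrite /Bs /= ifF; last lia.
  rewrite x1.
  have := nat_split m.
  lia.
move=> en; have om := odd_m cop en.
rewrite (Ts_small _ _ n0 (j := 1)); last lia.
exists (- (xv m./2 s 1)%:Z - 1).
rewrite /Bs /= /Xn ifT; last lia.
rewrite om; lia.
Qed.

Lemma half_eq (m n : nat) T T' : (0 < n)%N -> TT2 m n T -> TT2 m n T' ->
  canon n T -> canon n T' -> (forall j : nat, (j <= n./2)%N -> T j%:Z = T' j%:Z) ->
  forall a, T a = T' a.
Proof.
move=> n0 h2 h2' [c0 cs cp] [c0' cs' cp'] H a.
have [q [r [-> rn]]] := TB_split a n0.
have -> : q * n%:Z + r%:Z = r%:Z + q * n%:Z by ring.
rewrite (T2z h2) (T2z h2'); congr (_ - _).
case: (leqP r n./2) => rk; first exact: H.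
have k1 : (1 <= n./2)%N by lia.
have e1 := cs r%:Z; have e2 := cs' r%:Z.
have e3 := h2 (1 - r%:Z); have e4 := h2' (1 - r%:Z).
have q1 : 1 - r%:Z + n%:Z = (n.+1 - r)%N%:Z by lia.
rewrite q1 in e3 e4.
have H1 := H 1%N k1.
case: (leqP (n.+1 - r) n./2) => h.
  have H2 := H _ h.
  move: e1 e2 e3 e4 H1 H2; set u := T r%:Z; set u' := T' r%:Z; set v := T (1 - r%:Z);
    set v' := T' (1 - r%:Z); set w := T (n.+1 - r)%N%:Z; set w' := T' (n.+1 - r)%N%:Z;
    set y := T 1; set y' := T' 1; lia.
have q2 : (n.+1 - r)%N%:Z = r%:Z by lia.
rewrite q2 in e3 e4.
move: e1 e2 e3 e4 H1; set u := T r%:Z; set u' := T' r%:Z; set v := T (1 - r%:Z);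
    set v' := T' (1 - r%:Z); set y := T 1; set y' := T' 1; lia.
Qed.

Lemma extract (m n : nat) T : coprime m n -> (0 < n)%N -> TT1 T -> TT2 m n T -> canon n T ->
  exists s, good m n s /\ forall a, Ts m n s a = T a.
Proof.
move=> cop n0 h1 h2 cT; have [c0 cs cp] := cT.
have mE := nat_split m; have nE := nat_split n.
have T1le : T 1 <= 0 by have := T1mono h1 (a := 0) (a' := 1); rewrite c0; apply.
pose r := (odd m)%:Z; pose h := (m./2)%:Z; pose k := (n./2)%:Z.
have [q [qE q0 Tk]] : exists q : int, [/\ - T 1 = 2 * q + r, 0 <= q &
   (1 <= n./2)%N -> - (q + h + r) <= T k].
  case: (boolP (odd n)) => on.
    rewrite on in nE.
    have e1 := cs (k + 1); have e2 := h2 (1 - (k + 1)).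
    have q1 : 1 - (k + 1) + n%:Z = k + 1 by rewrite /k; lia.
    rewrite q1 in e2.
    have e3 := T1mono h1 (a := k) (a' := k + 1).
    exists (- T (k + 1) - h - r); split.
    - move: e1 e2; rewrite /h /r; set u := T (k + 1); set v := T (1 - (k + 1)); set y := T 1; lia.
    - move: e1 e2 T1le; rewrite /h /r; set u := T (k + 1); set v := T (1 - (k + 1)); set y := T 1; lia.
    - move=> _; move: e3; set u := T (k + 1); set v := T k; lia.
  have om := odd_m cop on; rewrite om in mE; rewrite (negbTE on) in nE.
  have [q' hq'] := cp on.
  exists (- q' - 1); split.
  - rewrite /r om; move: hq'; set y := T 1; lia.
  - move: hq' T1le; set y := T 1; lia.
  - move=> k1.
    have e1 := cs k; have e2 := h2 (1 - k).
    have q1 : 1 - k + n%:Z = k + 1 by rewrite /k; lia.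
    rewrite q1 in e2.
    have e3 := T1mono h1 (a := k) (a' := k + 1).
    move: e1 e2 e3 hq'; rewrite /h /r om; set u := T (k + 1); set v := T (1 - k);
      set w := T k; set y := T 1; lia.
pose f (i : nat) := `|(- T i.+1%:Z - q - r)%R|%N.
have fE : forall i : nat, (f i)%:Z = - T i.+1%:Z - q - r.
  move=> i; have := T1mono h1 (a := 1) (a' := i.+1%:Z); rewrite /f.
  move: qE q0; set y := T 1; set u := T i.+1%:Z; lia.
pose s := mkseq f n./2.
have g : good m n s.
  split; first by rewrite size_mkseq.
    rewrite /s /mkseq; apply: homo_sorted (iota_sorted 0 _).
    move=> i j ij; have := fE i; have := fE j.
    have := T1mono h1 (a := i.+1%:Z) (a' := j.+1%:Z).
    set u := T i.+1%:Z; set v := T j.+1%:Z; lia.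
  apply/(all_nthP 0%N) => i; rewrite size_mkseq => ik.
  rewrite nth_mkseq //.
  have := fE i; have := Tk (leq_ltn_trans (leq0n i) ik).
  have := T1mono h1 (a := i.+1%:Z) (a' := k).
  rewrite /h /k; set u := T i.+1%:Z; set v := T (n./2)%:Z; lia.
exists s; split => //.
have [t1 t2] := Ts_T1T2 n0 g.
apply: (half_eq n0 t2 h2 (Ts_canon n0 cop g) cT) => j jk.
have jn : (j < n)%N by lia.
rewrite Ts_small // /Bs.
case: (posnP j) => [->|j0]; first by rewrite c0.
rewrite /Xn ifT //.
have x1 : (xv m./2 s 1)%:Z = q.
  rewrite /xv /= /s nth_mkseq; last lia.
  rewrite fE; move: qE; set y := T 1; lia.
have xj : (xv m./2 s j)%:Z = - T j%:Z - q - r.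
  rewrite /xv /s nth_mkseq; last lia.
  rewrite fE prednK //.
move: x1 xj; rewrite /r; set u := T j%:Z; lia.
Qed.

Lemma ST_ptw (m n : nat) T T' : (forall a, T a = T' a) -> forall z, ST m n T z <-> ST m n T' z.
Proof. by move=> E z; split; case=> a [b [-> H]]; exists a, b; rewrite ?E // -E. Qed.

Lemma Dn_ptw (m n : nat) T T' : (forall a, T a = T' a) -> forall x, Dn m n T x <-> Dn m n T' x.
Proof.
move=> E x; have H := ST_ptw m n E.
split; case=> mu [[h1 h2] h3]; exists mu; (split; [split|]).
- by apply/H.
- by move=> z /H; apply: h2.
- by apply/H.
- by apply/H.
- by move=> z /H; apply: h2.
- by apply/H.
Qed.

Lemma good_det (m n : nat) s s' : (0 < n)%N -> good m n s -> good m n s' ->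
  (forall a, Ts m n s a = Ts m n s' a) -> s = s'.
Proof.
move=> n0 g g' E; have [sz so A] := g; have [sz' so' A'] := g'.
apply: (@eq_from_nth _ 0%N); first by rewrite sz sz'.
move=> i; rewrite sz => ik.
have k1 : (1 <= n./2)%N by lia.
have e1 := E 1; have ei := E i.+1%:Z.
rewrite !Ts_small // in e1 ei; try lia.
move: e1 ei; rewrite /Bs /= /Xn !ifT //; try lia.
rewrite /xv /= (set_nth_default m./2 0%N (s := s)) ?sz // (set_nth_default m./2 0%N (s := s')) ?sz' //.
set a1 := nth _ s 0; set a2 := nth _ s' 0; set b1 := nth _ s i; set b2 := nth _ s' i; lia.
Qed.

Lemma stmt (m n : nat) :
  (0 < m)%N -> (0 < n)%N -> coprime m n ->
  exists f : 'I_('C(m./2 + n./2, m./2)) -> (nat -> Prop),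
    [/\ (forall i, P_selfdual m n (f i)),
        (forall i j, (forall x, f i x <-> f j x) -> i = j) &
        (forall D, P_selfdual m n D -> exists i, forall x, D x <-> f i x)].
Proof.
move=> m0 n0 cop.
pose h := m./2; pose k := n./2.
pose S := [set t : k.-tuple 'I_h.+1 | sorted leq [seq val i | i <- t]].
have eqC : #|S| = 'C(m./2 + n./2, m./2).
  rewrite card_sorted_tuples -/h -/k addnC.
  have := bin_sub (leq_addl h k); rewrite addnK => <-; done.
have goodS : forall t, t \in S -> good m n [seq val i | i <- t].
  move=> t; rewrite inE => so; split => //; first by rewrite size_map size_tuple.
  apply/allP => x /mapP [i _ ->]; exact: (ltn_ord i).
pose F (t : k.-tuple 'I_h.+1) := Dn m n (Ts m n [seq val i | i <- t]).
pose g (i : 'I_('C(m./2 + n./2, m./2))) := enum_val (cast_ord (esym eqC) i).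
have gS : forall i, g i \in S by move=> i; exact: enum_valP.
exists (fun i => F (g i)); split.
- move=> i; have gd := goodS _ (gS i).
  have [t1 t2] := Ts_T1T2 n0 gd; have [_ cs _] := Ts_canon n0 cop gd.
  exact: (Dn_selfdual cop n0 t1 t2 cs).
- move=> i j E.
  have gi := goodS _ (gS i); have gj := goodS _ (gS j).
  have [ti1 ti2] := Ts_T1T2 n0 gi; have [tj1 tj2] := Ts_T1T2 n0 gj.
  have [a0 [b0 Et]] := Dn_eq_trans cop n0 ti1 ti2 tj1 tj2 E.
  have Eq := canon_trans_eq cop n0 ti2 (Ts_canon n0 cop gi) (Ts_canon n0 cop gj) Et.
  have e := good_det n0 gj gi Eq.
  have e2 : g j = g i by apply: val_inj; exact: (inj_map val_inj e).
  by have := cast_ord_inj (enum_val_inj e2) => ->.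
- move=> D [sm D0 sd].
  have [T [h1 h2 HE]] := D_threshold cop n0 sm D0.
  have : antisym (EE D) by apply/(selfdual_iff cop n0 sm D0).
  case=> c Hc.
  have [kk [C hs]] : exists kk C, forall a, T a + T (kk - a) = C.
    apply/(antisym_sym cop n0 h2); exists c => z; rewrite -!HE; exact: Hc.
  have [T' [h1' h2' cT' [a0 [b0 Et]]]] := canonicalize cop n0 h1 h2 hs.
  have [s [gs Es]] := extract cop n0 h1' h2' cT'.
  have [sz so A] := gs.
  have szt : size [seq inord x : 'I_h.+1 | x <- s] == k by rewrite size_map sz.
  pose t := Tuple szt.
  have st : [seq val i | i <- t] = s.
    rewrite /= -map_comp; apply: map_id_in => x xs /=; rewrite inordK //.
    by move/allP: A => /(_ x xs).
  have tS : t \in S by rewrite inE st.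
  exists (cast_ord eqC (enum_rank_in tS t)).
  rewrite /g cast_ordK (enum_rankK_in tS tS) /F st => x.
  apply: (D_is_Dn (c0 := a0 * m%:Z + b0 * n%:Z) cop n0 (proj1 (Ts_T1T2 n0 gs)) (proj2 (Ts_T1T2 n0 gs)) D0).
  move=> z; rewrite (ST_ptw m n Es) (ST_ptw m n Et) ST_trans // HE //.
Qed.

Local Close Scope ring_scope.

Theorem mainTheorem12 (m n : nat) :
  0 < m -> 0 < n -> coprime m n ->
  exists f : 'I_('C(m./2 + n./2, m./2)) -> (nat -> Prop),
    [/\ (forall i, P_selfdual m n (f i)),
        (forall i j, (forall x, f i x <-> f j x) -> i = j) &
        (forall D, P_selfdual m n D -> exists i, forall x, D x <-> f i x)].
Proof. exact: stmt. Qed.
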